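(* Let $M$ be a message set such that $G_M$ is an oriented ring. For any $M$-system $S$, $S$ is $1$-synchronizable if and only if it is synchronizable.
   Context: A message set $M=(\Sigma_M,N,\mathrm{src},\mathrm{dst})$: finite set of messages, $N\ge1$ peers, $\mathrm{src}(a)\neq\mathrm{dst}(a)\in\{1,\dots,N\}$. Its communication topology $G_M$ is the directed graph on $\{1,\dots,N\}$ with an edge $i\to j$ iff some message $a$ has $\mathrm{src}(a)=i$, $\mathrm{dst}(a)=j$; $G_M$ is an oriented ring if its edge set is exactly $\{(i,j)\mid j=i+1 \bmod N\}$. Actions $!a$ (by peer $\mathrm{src}(a)$), $?a$ (by peer $\mathrm{dst}(a)$); traces are finite action sequences; $!?a$ abbreviates $!a\cdot?a$. For a trace $\tau$, $\pi_!(\tau)$ is the sequence of sent messages; $\mathrm{buf}_{i\to j}(\tau)$ is the word $w$ (if any) with (sent on $i\to j$) $=$ (received on $i\to j$)$\cdot w$. $\tau$ is FIFO ($k$-bounded FIFO) if for all $i,j$ and prefixes $\tau'$, $\mathrm{buf}_{i\to j}(\tau')$ is defined (and has length $\le k$); synchronous if of the form $!?a_1\cdots!?a_k$. An $M$-system $S=(P_1,\dots,P_N)$: finite automata $P_i$ (all states accepting) over actions of peer $i$, with one FIFO channel per ordered pair $i\neq j$. A configuration: one control state per peer and contents $w_{i,j}$ of channels; stable if all channels empty. $!a$ ($\mathrm{src}(a)=i,\mathrm{dst}(a)=j$) moves $P_i$ and appends $a$ to $w_{i,j}$; $?a$ moves $P_j$ and removes $a$ from the head of $w_{i,j}$; $c_0$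 is the initial configuration. $T_k(S)$ ($k\ge1$): $k$-bounded FIFO traces $\tau$ with $c_0\xrightarrow{\tau}c$ for some $c$; $T_0(S)$: synchronous such traces; $T_\omega(S)=\bigcup_kT_k(S)$. $ST_k(S)=\{\pi_!(\tau)\mid\tau\in T_k(S)\}\cup\{(\pi_!(\tau),c)\mid c_0\xrightarrow{\tau}c,\ c\text{ stable},\ \tau\in T_k(S)\}$. $S$ is synchronizable if $ST_0(S)=ST_\omega(S)$ and $1$-synchronizable if $ST_0(S)=ST_1(S)$. *)

(* Defs.v *)
From mathcomp Require Import all_boot.
Set Implicit Arguments. Unset Strict Implicit. Unset Printing Implicit Defensive.

(* Communicating FIFO systems, following the paper's definitions.
   Peers are 'I_N (i.e. {0,...,N-1} instead of {1,...,N}). *)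

Inductive action (Sigma : Type) : Type :=
| Send of Sigma
| Recv of Sigma.
Arguments Send {Sigma} _.
Arguments Recv {Sigma} _.

Section Systems.
Variables (Sigma : finType) (N : nat) (src dst : Sigma -> 'I_N).

Definition oriented_ring : Prop :=
  forall i j : 'I_N,
    (exists a : Sigma, src a = i /\ dst a = j) <-> (val j = (val i + 1) %% N).

(* An M-system: one finite automaton per peer (all states accepting).
   W.l.o.g. all automata share one finite state type Q; the automaton of
   peer i is (q0 i, delta i); only transitions of delta i on actions of
   peer i are ever used (Send a with src a = i, Recv a with dst a = i). *)
Record system (Q : finType) := System {
  q0 : 'I_N -> Q;
  delta : 'I_N -> Q -> action Sigma -> Q -> bool }.

Variable Q : finType.
Variable S : system Q.

Definition config := ({ffun 'I_N -> Q} * {ffun 'I_N * 'I_N -> seq Sigma})%type.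

Definition c0 : config := ([ffun i => q0 S i], [ffun _ => [::]]).

Definition stable (c : config) : Prop := forall i j : 'I_N, i != j -> c.2 (i, j) = [::].

Definition upd_state (c : config) (i : 'I_N) (q : Q) : {ffun 'I_N -> Q} :=
  [ffun k => if k == i then q else c.1 k].
Definition upd_chan (c : config) (p : 'I_N * 'I_N) (w : seq Sigma)
  : {ffun 'I_N * 'I_N -> seq Sigma} :=
  [ffun k => if k == p then w else c.2 k].

Inductive step : config -> action Sigma -> config -> Prop :=
| step_send (c : config) (a : Sigma) (q' : Q) :
    delta S (src a) (c.1 (src a)) (Send a) q' ->
    step c (Send a) (upd_state c (src a) q',
                     upd_chan c (src a, dst a) (rcons (c.2 (src a, dst a)) a))
| step_recv (c : config) (a : Sigma) (q' : Q) (w : seq Sigma) :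
    c.2 (src a, dst a) = a :: w ->
    delta S (dst a) (c.1 (dst a)) (Recv a) q' ->
    step c (Recv a) (upd_state c (dst a) q', upd_chan c (src a, dst a) w).

Inductive reach : config -> seq (action Sigma) -> config -> Prop :=
| reach_nil (c : config) : reach c [::] c
| reach_cons (c c1 c2 : config) (x : action Sigma) (t : seq (action Sigma)) :
    step c x c1 -> reach c1 t c2 -> reach c (x :: t) c2.

Definition sent_of (x : action Sigma) : option Sigma :=
  if x is Send a then Some a else None.
Definition recv_of (x : action Sigma) : option Sigma :=
  if x is Recv a then Some a else None.

Definition sends (t : seq (action Sigma)) : seq Sigma := pmap sent_of t.

Definition on_chan (i j : 'I_N) (a : Sigma) : bool := (src a == i) && (dst a == j).

Definition sent_on (i j : 'I_N) (t : seq (action Sigma)) : seq Sigma :=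
  filter (on_chan i j) (pmap sent_of t).
Definition recv_on (i j : 'I_N) (t : seq (action Sigma)) : seq Sigma :=
  filter (on_chan i j) (pmap recv_of t).

Definition buf (i j : 'I_N) (t : seq (action Sigma)) : option (seq Sigma) :=
  if prefix (recv_on i j t) (sent_on i j t)
  then Some (drop (size (recv_on i j t)) (sent_on i j t)) else None.

Definition fifo_trace (t : seq (action Sigma)) : Prop :=
  forall (n : nat) (i j : 'I_N), buf i j (take n t) != None.

Definition kbounded_fifo_trace (k : nat) (t : seq (action Sigma)) : Prop :=
  forall (n : nat) (i j : 'I_N),
    exists2 w, buf i j (take n t) = Some w & size w <= k.

Definition synchronous_trace (t : seq (action Sigma)) : Prop :=
  exists s : seq Sigma, t = flatten [seq [:: Send a; Recv a] | a <- s].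

Definition T (k : nat) (t : seq (action Sigma)) : Prop :=
  (if k is 0 then synchronous_trace t else kbounded_fifo_trace k t) /\
  exists c, reach c0 t c.

Definition T_omega (t : seq (action Sigma)) : Prop := exists k, T k t.

Inductive st_elt : Type :=
| STseq of seq Sigma
| STpair of seq Sigma & config.

Definition ST_of (Tk : seq (action Sigma) -> Prop) (o : st_elt) : Prop :=
  match o with
  | STseq u => exists t, Tk t /\ sends t = u
  | STpair u c => exists t, Tk t /\ sends t = u /\ reach c0 t c /\ stable c
  end.

Definition ST (k : nat) := ST_of (T k).
Definition ST_omega := ST_of T_omega.

Definition synchronizable : Prop := forall o, ST 0 o <-> ST_omega o.
Definition one_synchronizable : Prop := forall o, ST 0 o <-> ST 1 o.

End Systems.

(* Main.v *)
Require Import Defs.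
From mathcomp Require Import all_boot.
From Stdlib Require Import Setoid.
From mathcomp Require Import zify.
Set Implicit Arguments. Unset Strict Implicit. Unset Printing Implicit Defensive.

Section Main.
Variables (Sigma : finType) (N : nat) (src dst : Sigma -> 'I_N).
Hypothesis Hsd : forall a : Sigma, src a != dst a.
Variable Q : finType.
Variable S : system Sigma N Q.

Local Notation act := (action Sigma).
Local Notation cfg := (config Sigma N Q).
Local Notation step := (step src dst S).
Local Notation reach := (reach src dst S).
Local Notation c0 := (c0 S).

Lemma reach_cat c t1 t2 c' :
  reach c (t1 ++ t2) c' <-> exists cm, reach c t1 cm /\ reach cm t2 c'.
Proof.
elim: t1 c => [|x t1 IH] c /=.
  split; [by move=> H; exists c; split=> //; constructor|].
  by case=> cm [H1 H2]; inversion H1; subst.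
split.
  move=> H; inversion H; subst.
  have [cm [H1 H2]] := (IH c1).1 H5.
  by exists cm; split=> //; econstructor; eauto.
case=> cm [H1 H2]; inversion H1; subst.
econstructor; first eassumption.
by apply/(IH c1).2; exists cm.
Qed.

Lemma reach_rcons c t x c' :
  reach c (rcons t x) c' <-> exists cm, reach c t cm /\ step cm x c'.
Proof.
rewrite -cats1 reach_cat; split; case=> cm [H1 H2]; exists cm; split=> //.
  by inversion H2; subst; inversion H6; subst.
by econstructor; eauto; constructor.
Qed.

Lemma sent_on_rcons i j t x :
  sent_on src dst i j (rcons t x) =
  sent_on src dst i j t ++ (if x is Send a then (if on_chan src dst i j a then [:: a] else [::]) else [::]).
Proof. by rewrite /sent_on -cats1 pmap_cat filter_cat; case: x => a //=; case: ifP. Qed.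

Lemma recv_on_rcons i j t x :
  recv_on src dst i j (rcons t x) =
  recv_on src dst i j t ++ (if x is Recv a then (if on_chan src dst i j a then [:: a] else [::]) else [::]).
Proof. by rewrite /recv_on -cats1 pmap_cat filter_cat; case: x => a //=; case: ifP. Qed.

Lemma on_chanE i j a : on_chan src dst i j a = ((i, j) == (src a, dst a)).
Proof. by rewrite /on_chan xpair_eqE eq_sym [dst a == j]eq_sym. Qed.

Lemma chan_inv t c : reach c0 t c ->
  forall i j, sent_on src dst i j t = recv_on src dst i j t ++ c.2 (i, j).
Proof.
elim/last_ind: t c => [|t x IH] c.
  by move=> H; inversion H; subst => i j /=; rewrite ffunE.
case/reach_rcons=> cm [H1 H2] i j.
rewrite sent_on_rcons recv_on_rcons (IH _ H1 i j).
inversion H2; subst => /=; rewrite ffunE on_chanE; case: eqP => [[-> ->]|_].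
- by rewrite cats0 -cats1 catA.
- by rewrite !cats0.
- by rewrite cats0 H -catA.
- by rewrite !cats0.
Qed.

Lemma buf_reach t c : reach c0 t c ->
  forall i j, buf src dst i j t = Some (c.2 (i, j)).
Proof.
move=> H i j; rewrite /buf (chan_inv H i j) prefix_prefix.
by rewrite drop_size_cat.
Qed.

Definition bnd (c : cfg) := forall i j, size (c.2 (i, j)) <= 1.

Inductive reach1 : cfg -> seq act -> cfg -> Prop :=
| r1nil c : bnd c -> reach1 c [::] c
| r1cons c c1 c2 x t : bnd c -> step c x c1 -> reach1 c1 t c2 -> reach1 c (x :: t) c2.

Lemma reach1_reach c t c' : reach1 c t c' -> reach c t c'.
Proof. by elim=> {c t c'} [c _|c c1 c2 x t _ Hs _ IH]; econstructor; eauto. Qed.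

Lemma reach1_bnd c t c' : reach1 c t c' -> bnd c'.
Proof. by elim. Qed.

Lemma reach1_bnd0 c t c' : reach1 c t c' -> bnd c.
Proof. by case. Qed.

Lemma reach1_cat c t1 t2 c' :
  reach1 c (t1 ++ t2) c' <-> exists cm, reach1 c t1 cm /\ reach1 cm t2 c'.
Proof.
elim: t1 c => [|x t1 IH] c /=.
  split; [move=> H; exists c; split=> //; constructor; exact: reach1_bnd0 H|].
  by case=> cm [H1 H2]; inversion H1; subst.
split.
  move=> H; inversion H as [|? c1 ? ? ? Hb Hs Hr]; subst.
  have [cm [Ha Hc]] := (IH c1).1 Hr.
  by exists cm; split=> //; econstructor; eauto.
case=> cm [Ha Hc]; inversion Ha as [|? c1 ? ? ? Hb Hs Hr]; subst.
econstructor; [eassumption|eassumption|].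
by apply/(IH c1).2; exists cm.
Qed.

Lemma reach1_kb t c : reach1 c0 t c -> kbounded_fifo_trace src dst 1 t.
Proof.
move=> H n i j.
have /reach1_cat [cm [H1 _]] : reach1 c0 (take n t ++ drop n t) c by rewrite cat_take_drop.
exists (cm.2 (i, j)); first exact: buf_reach (reach1_reach H1) i j.
exact: (reach1_bnd H1).
Qed.

Inductive lrun (j : 'I_N) : Q -> seq act -> Q -> Prop :=
| lnil q : lrun j q [::] q
| lcons q q1 q2 x w : delta S j q x q1 -> lrun j q1 w q2 -> lrun j q (x :: w) q2.

Lemma lrun_cat j q w1 w2 q' :
  lrun j q (w1 ++ w2) q' <-> exists qm, lrun j q w1 qm /\ lrun j qm w2 q'.
Proof.
elim: w1 q => [|x w1 IH] q /=.
  split; [by move=> H; exists q; split=> //; constructor|].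
  by case=> qm [H1 H2]; inversion H1; subst.
split.
  move=> H; inversion H; subst.
  have [qm [H1 H2]] := (IH q1).1 H5.
  by exists qm; split=> //; econstructor; eauto.
case=> qm [H1 H2]; inversion H1; subst.
econstructor; first eassumption.
by apply/(IH q1).2; exists qm.
Qed.

Definition pj (j : 'I_N) (a : Sigma) : seq act :=
  if src a == j then [:: Send a] else if dst a == j then [:: Recv a] else [::].
Definition proj j (u : seq Sigma) : seq act := flatten (map (pj j) u).

Lemma proj_cat j u1 u2 : proj j (u1 ++ u2) = proj j u1 ++ proj j u2.
Proof. by rewrite /proj map_cat flatten_cat. Qed.
Lemma proj_cons j a u : proj j (a :: u) = pj j a ++ proj j u.
Proof. by []. Qed.
Lemma proj_nil j : proj j [::] = [::].
Proof. by []. Qed.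

Definition sync_of (u : seq Sigma) : seq act :=
  flatten [seq [:: Send a; Recv a] | a <- u].

Lemma sends_sync u : sends (sync_of u) = u.
Proof. by elim: u => // a u IH; rewrite /sends /= in IH *; rewrite IH. Qed.

Lemma sync_of_cat u1 u2 : sync_of (u1 ++ u2) = sync_of u1 ++ sync_of u2.
Proof. by rewrite /sync_of map_cat flatten_cat. Qed.

Lemma sends_cat (t1 t2 : seq act) : sends (t1 ++ t2) = sends t1 ++ sends t2.
Proof. by rewrite /sends pmap_cat. Qed.


Lemma lrun_nil_inv j q q' : lrun j q [::] q' -> q' = q.
Proof. by inversion 1. Qed.

Lemma lrun_cons_inv j q x w q' : lrun j q (x :: w) q' ->
  exists q1, delta S j q x q1 /\ lrun j q1 w q'.
Proof. by inversion 1; subst; eauto. Qed.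

Lemma pj_src a : pj (src a) a = [:: Send a].
Proof. by rewrite /pj eqxx. Qed.
Lemma pj_dst a : pj (dst a) a = [:: Recv a].
Proof. by rewrite /pj (negbTE (Hsd a)) eqxx. Qed.
Lemma pj_other k a : k != src a -> k != dst a -> pj k a = [::].
Proof. by rewrite /pj => /negbTE H1 /negbTE H2; rewrite eq_sym H1 eq_sym H2. Qed.

Lemma sync_mix (u : seq Sigma) : forall (x : cfg) (h : 'I_N -> Q), bnd x ->
  (forall a, a \in u -> x.2 (src a, dst a) = [::]) ->
  (forall k, lrun k (x.1 k) (proj k u) (h k)) ->
  reach1 x (sync_of u) ([ffun k => h k], x.2).
Proof.
elim: u => [|a u IH] x h Hb Hch Hr /=.
  have -> : ([ffun k => h k], x.2) = x.
    case: x Hb Hch Hr => f ch Hb Hch Hr /=; congr pair; apply/ffunP => k.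
    by rewrite ffunE (lrun_nil_inv (Hr k)).
  by constructor.
have Hsa := Hr (src a); rewrite proj_cons pj_src /= in Hsa.
have [q1 [Hd1 Hr1]] := lrun_cons_inv Hsa.
have Hda := Hr (dst a); rewrite proj_cons pj_dst /= in Hda.
have [q2 [Hd2 Hr2]] := lrun_cons_inv Hda.
have Hx0 : x.2 (src a, dst a) = [::] by apply: Hch; rewrite inE eqxx.
set x1 : cfg := (upd_state x (src a) q1, upd_chan x (src a, dst a) (rcons (x.2 (src a, dst a)) a)).
set x2 : cfg := (upd_state x1 (dst a) q2, upd_chan x1 (src a, dst a) [::]).
have Hx2 : x2.2 = x.2.
  apply/ffunP=> p; rewrite /x2 /x1 /= !ffunE; case: eqP => [->|//].
  by rewrite Hx0.
have Hs1 : step x (Send a) x1 by constructor.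
have Hs2 : step x1 (Recv a) x2.
  apply: step_recv; first by rewrite /x1 /= ffunE eqxx Hx0.
  by rewrite /x1 /= ffunE eq_sym (negbTE (Hsd a)).
have Hb1 : bnd x1.
  move=> i j; rewrite /x1 /= ffunE; case: eqP => [_|_ ]; last exact: Hb.
  by rewrite Hx0.
have H2 : reach1 x2 (sync_of u) ([ffun k => h k], x2.2).
  apply: IH.
  - by move=> i j; rewrite Hx2.
  - by move=> b Hb'; rewrite Hx2; apply: Hch; rewrite inE Hb' orbT.
  move=> k; rewrite /x2 /x1 /= !ffunE.
  case: (eqVneq k (dst a)) => [->|Hkd]; first by [].
  case: (eqVneq k (src a)) => [->|Hks]; first by [].
  by have := Hr k; rewrite proj_cons pj_other.
rewrite Hx2 in H2.
by apply: r1cons Hb Hs1 _; apply: r1cons Hb1 Hs2 H2.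
Qed.

Lemma sync_proj (u : seq Sigma) : forall x y : cfg,
  (forall a, a \in u -> x.2 (src a, dst a) = [::]) ->
  reach x (sync_of u) y ->
  (forall k, lrun k (x.1 k) (proj k u) (y.1 k)) /\ y.2 = x.2.
Proof.
elim: u => [|a u IH] x y Hch /=.
  by move=> H; inversion H; subst; split=> // k; constructor.
move=> H; inversion H as [|? x1 ? ? ? Hs1 H1]; subst.
inversion H1 as [|? x2 ? ? ? Hs2 H2]; subst.
inversion Hs1 as [? ? q1 Hd1 E1 E2|]; subst.
inversion Hs2 as [|? ? q2 w Hw Hd2 E1 E2]; subst.
have Hx0 : x.2 (src a, dst a) = [::] by apply: Hch; rewrite inE eqxx.
move: Hw Hd2; rewrite /= ffunE eqxx Hx0 /= => /(congr1 behead) /= Ew Hd2; subst w.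
pose x1 : cfg := (upd_state x (src a) q1,
       upd_chan x (src a, dst a) (rcons (x.2 (src a, dst a)) a)).
pose x2 : cfg := (upd_state x1 (dst a) q2, upd_chan x1 (src a, dst a) [::]).
change (reach x2 (sync_of u) y) in H2.
have Hch2 : forall b, b \in u -> x2.2 (src b, dst b) = [::].
  move=> b Hb; rewrite /x2 /x1 /= !ffunE; case: eqP => // _.
  by apply: Hch; rewrite inE Hb orbT.
have [IH1 IH2] := IH x2 y Hch2 H2.
split.
  move=> k; have := IH1 k; rewrite /= !ffunE proj_cons.
  case: (eqVneq k (dst a)) => [->|Hkd].
    rewrite pj_dst => Hr; econstructor; last exact: Hr.
    by move: Hd2; rewrite /= ffunE eq_sym (negbTE (Hsd a)).
  case: (eqVneq k (src a)) => [->|Hks].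
    by rewrite pj_src => Hr; econstructor; [exact: Hd1| exact: Hr].
  by rewrite pj_other.
rewrite IH2; apply/ffunP => p; rewrite !ffunE; case: eqP => [->|//].
by rewrite Hx0.
Qed.

Definition L0 u := forall k, exists s, lrun k (q0 S k) (proj k u) s.

Lemma c0_empty a : c0.2 a = [::].
Proof. by rewrite ffunE. Qed.

Lemma bnd_c0 : bnd c0.
Proof. by move=> i j; rewrite c0_empty. Qed.

Lemma sync_eq (t : seq act) : synchronous_trace t -> t = sync_of (sends t).
Proof. by case=> s ->; rewrite -/(sync_of s) sends_sync. Qed.

Lemma ST0_runs u c : ST src dst S 0 (STpair u c) ->
  forall k, lrun k (q0 S k) (proj k u) (c.1 k).
Proof.
case=> t [[Hsync _] [Hs [Hr _]]] k.
move: Hr; rewrite (sync_eq Hsync) Hs => Hr.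
have [H _] := sync_proj (fun b _ => c0_empty (src b, dst b)) Hr.
by have := H k; rewrite /= ffunE.
Qed.

Lemma ST0_L0 u : ST src dst S 0 (STseq N Q u) -> L0 u.
Proof.
case=> t [[Hsync [c Hr]] Hs] k.
move: Hr; rewrite (sync_eq Hsync) Hs => Hr.
have [H _] := sync_proj (fun b _ => c0_empty (src b, dst b)) Hr.
by exists (c.1 k); have := H k; rewrite /= ffunE.
Qed.

Lemma runs_reach1 u (h : 'I_N -> Q) : (forall k, lrun k (q0 S k) (proj k u) (h k)) ->
  reach1 c0 (sync_of u) ([ffun k => h k], c0.2).
Proof.
move=> H; apply: sync_mix bnd_c0 (fun b _ => c0_empty (src b, dst b)) _.
by move=> k; rewrite ffunE.
Qed.

Lemma L0_ST0 u : L0 u -> ST src dst S 0 (STseq N Q u).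
Proof.
move=> /fin_all_exists [h Hh].
have H := runs_reach1 Hh.
exists (sync_of u); split; last exact: sends_sync.
split; first by exists u.
by exists ([ffun k => h k], c0.2); apply: reach1_reach.
Qed.

Lemma on_chan_ii i a : on_chan src dst i i a = false.
Proof.
rewrite /on_chan; apply/negP => /andP[/eqP E1 /eqP E2].
by move: (Hsd a); rewrite E1 E2 eqxx.
Qed.

Lemma diag_empty t c : reach c0 t c -> forall i, c.2 (i, i) = [::].
Proof.
move=> H i; have := chan_inv H i i.
have E : forall s, filter (on_chan src dst i i) s = [::].
  by elim=> //= a s ->; rewrite on_chan_ii.
by rewrite /sent_on /recv_on !E /= => <-.
Qed.

Lemma runs_ST0 t0 u c : reach c0 t0 c -> stable c ->
  (forall k, lrun k (q0 S k) (proj k u) (c.1 k)) -> ST src dst S 0 (STpair u c).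
Proof.
move=> Hc Hst H.
have H1 := runs_reach1 H.
have E : ([ffun k => c.1 k], c0.2) = c.
  case: c Hc Hst H H1 => f ch Hc Hst H H1 /=; congr pair; apply/ffunP.
    by move=> k; rewrite ffunE.
  case=> i j; rewrite ffunE; case: (eqVneq i j) => [<-|Hij].
    by rewrite (diag_empty Hc).
  by rewrite (Hst i j Hij).
rewrite E in H1.
exists (sync_of u); split; first by split; [exists u | exists c; exact: reach1_reach].
by rewrite sends_sync; split=> //; split=> //; exact: reach1_reach.
Qed.

Lemma T0_T1 t : T src dst S 0 t -> T src dst S 1 t.
Proof.
case=> Hsync [c Hr]; split; last by exists c.
move: Hr; rewrite (sync_eq Hsync) => Hr.
have [H _] := sync_proj (fun b _ => c0_empty (src b, dst b)) Hr.
have H' : forall k, lrun k (q0 S k) (proj k (sends t)) (c.1 k).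
  by move=> k; have := H k; rewrite ffunE.
exact: reach1_kb (runs_reach1 H').
Qed.

Fixpoint projk (j : 'I_N) (k : nat) (u : seq Sigma) : seq act :=
  match u with
  | [::] => [::]
  | a :: u' => if src a == j then Send a :: projk j k u'
               else if dst a == j then (if k is k'.+1 then Recv a :: projk j k' u' else projk j 0 u')
               else projk j k u'
  end.

Lemma src_dst_ne a j : src a == j -> (dst a == j) = false.
Proof. by move=> /eqP <-; rewrite eq_sym (negbTE (Hsd a)). Qed.

Lemma projk_cat j k u1 u2 :
  projk j k (u1 ++ u2) = projk j k u1 ++ projk j (k - count (fun a => dst a == j) u1) u2.
Proof.
elim: u1 k => [|a u1 IH] k /=; first by rewrite subn0.
case: ifP => Hs.
  by rewrite (src_dst_ne Hs) add0n IH.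
case: ifP => Hd /=.
  case: k => [|k] /=; first by rewrite IH.
  by rewrite IH add1n subSS.
by rewrite add0n IH.
Qed.

Lemma projk_full j k u : count (fun a => dst a == j) u <= k -> projk j k u = proj j u.
Proof.
elim: u k => [|a u IH] k //=.
rewrite proj_cons /pj; case: ifP => Hs.
  by rewrite (src_dst_ne Hs) add0n => Hk; rewrite IH.
case: ifP => Hd /=.
  by case: k => [|k] //; rewrite add1n ltnS => Hk; rewrite IH.
by rewrite add0n => Hk; rewrite IH.
Qed.

Definition notfrom (i : 'I_N) (x : act) : bool :=
  match x with Send a => src a != i | Recv a => dst a != i end.

Lemma sends_notfrom i t : sends (filter (notfrom i) t) = filter (fun a => src a != i) (sends t).
Proof.
elim: t => [|x t IH] //=; case: x => a /=.
  by case: ifP => _; rewrite /sends /= -/(sends _) IH.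
by case: ifP => _; rewrite /sends /= -/(sends _) IH.
Qed.

Lemma projk0_filter j i u : i != j ->
  projk j 0 (filter (fun a => src a != i) u) = projk j 0 u.
Proof.
move=> Hij; elim: u => [|a u IH] //=.
case: (eqVneq (src a) i) => [Ha|Ha] /=.
  rewrite Ha (negbTE Hij); by case: ifP.
by rewrite IH.
Qed.

Lemma split_send (P : pred Sigma) (t : seq act) R y w :
  filter P (sends t) = R ++ y :: w ->
  exists ta tb, [/\ t = ta ++ Send y :: tb, filter P (sends ta) = R & filter P (sends tb) = w].
Proof.
elim: t R => [|x t IH] R; first by case: R.
case: x => a; rewrite /sends /= -!/(sends _).
  case: ifP => Pa.
    case: R => [|b R] /=.
      by case=> <- <-; exists [::], t; split.
    case=> Eb /IH [ta [tb [-> H1 H2]]].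
    by exists (Send a :: ta), tb; split=> //; rewrite /sends /= -/(sends _) Pa H1 Eb.
  move=> /IH [ta [tb [-> H1 H2]]].
  by exists (Send a :: ta), tb; split=> //; rewrite /sends /= -/(sends _) Pa H1.
move=> /IH [ta [tb [-> H1 H2]]].
by exists (Recv a :: ta), tb; split.
Qed.

Lemma filter_nil_all (P : pred Sigma) s : filter P s = [::] -> forall a, a \in s -> ~~ P a.
Proof.
move=> H a Ha; apply/negP => Pa.
have : a \in filter P s by rewrite mem_filter Pa Ha.
by rewrite H.
Qed.

Definition recvs (t : seq act) : seq Sigma := pmap (@recv_of _) t.

Lemma recvs_cat (t1 t2 : seq act) : recvs (t1 ++ t2) = recvs t1 ++ recvs t2.
Proof. by rewrite /recvs pmap_cat. Qed.

Definition nrecv (j : 'I_N) (t : seq act) := size (filter (fun a => dst a == j) (recvs t)).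

Hypothesis Hring : oriented_ring src dst.

Lemma ring_val a : val (dst a) = (val (src a) + 1) %% N.
Proof. by apply/(Hring (src a) (dst a)).1; exists a. Qed.

Lemma ring_dst a b : src a = src b -> dst a = dst b.
Proof. by move=> E; apply: val_inj; rewrite /= !ring_val E. Qed.

Lemma ring_src a b : dst a = dst b -> src a = src b.
Proof.
move=> E; have := congr1 val E; rewrite /= !ring_val => /eqP.
rewrite eqn_modDr !modn_small ?ltn_ord // => /eqP H.
exact: val_inj.
Qed.

Lemma srcdst_iff m a : (src a == src m) = (dst a == dst m).
Proof.
apply/eqP/eqP; first exact: ring_dst.
exact: ring_src.
Qed.

Lemma on_chan_src m s : filter (on_chan src dst (src m) (dst m)) s = filter (fun a => src a == src m) s.
Proof. by apply: eq_filter => a; rewrite /on_chan -srcdst_iff andbb. Qed.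

Lemma on_chan_dst m s : filter (on_chan src dst (src m) (dst m)) s = filter (fun a => dst a == dst m) s.
Proof. by apply: eq_filter => a; rewrite /on_chan srcdst_iff andbb. Qed.

Lemma filter_src_dst m s : filter (fun a => src a == src m) s = filter (fun a => dst a == dst m) s.
Proof. by apply: eq_filter => a; rewrite srcdst_iff. Qed.

Lemma nrecv_le t c k : reach c0 t c -> nrecv k t <= count (fun a => dst a == k) (sends t).
Proof.
move=> H.
case: (pickP (fun m => dst m == k)) => [m /eqP Hm|Hn]; last first.
  rewrite /nrecv (eq_in_filter (a2 := pred0)); first by rewrite filter_pred0.
  by move=> a _; rewrite Hn.
have := chan_inv H (src m) (dst m).
rewrite /sent_on /recv_on !on_chan_dst -Hm -size_filter => E.
by rewrite /nrecv -/(recvs t) E /sends size_cat leq_addr.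
Qed.

Section Cut.
Variables (i td : 'I_N).
Hypothesis Htd : forall m, src m = i -> dst m = td.

Definition Rel (x x' : cfg) :=
  [/\ forall k, k != i -> x'.1 k = x.1 k,
      forall a b, a != i -> b != i -> x'.2 (a, b) = x.2 (a, b),
      forall a, a != i -> exists R, x'.2 (a, i) = R ++ x.2 (a, i) &
      forall b, b != i -> exists S0, x.2 (i, b) = x'.2 (i, b) ++ S0].

Definition rf (t : seq act) := size (filter (fun a => src a == i) (recvs t)).

Lemma cut_gen tt : forall x x' y, reach x tt y -> Rel x x' ->
  rf tt <= size (x'.2 (i, td)) ->
  exists y', reach x' (filter (notfrom i) tt) y' /\ forall k, k != i -> y'.1 k = y.1 k.
Proof.
elim: tt => [|e tt IH] x x' y Hr HR Hc.
  inversion Hr; subst; exists x'; split; first by constructor.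
  by case: HR => H1 _ _ _.
inversion Hr as [|? x1 ? ? ? Hs Hr1]; subst.
case: HR => HR1 HR2 HR3 HR4.
inversion Hs as [? a q Hd E1 E2 | ? a q w Hw Hd E1 E2]; subst.
-
  case: (eqVneq (src a) i) => Ha.
  + rewrite /= Ha eqxx /=.
    apply: (IH _ x' y Hr1); last by move: Hc; rewrite /rf /recvs.
    split.
    * by move=> k Hk; rewrite /= ffunE Ha (negbTE Hk) (HR1 k Hk).
    * move=> a' b' Ha' Hb'; rewrite /= ffunE xpair_eqE Ha (negbTE Ha') /=.
      exact: HR2.
    * by move=> a' Ha'; rewrite /= ffunE xpair_eqE Ha (negbTE Ha') /=; apply: HR3.
    * move=> b Hb; rewrite /= ffunE xpair_eqE Ha eqxx /=.
      case: (eqVneq b (dst a)) Hb => [->|Hbd] Hb; last exact: HR4.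
      have [S0 HS0] := HR4 (dst a) Hb.
      by exists (rcons S0 a); rewrite HS0 rcons_cat.
  + rewrite /= Ha /=.
    pose x1' : cfg := (upd_state x' (src a) q, upd_chan x' (src a, dst a) (rcons (x'.2 (src a, dst a)) a)).
    have Hs' : step x' (Send a) x1' by constructor; rewrite (HR1 _ Ha).
    have HRel : Rel (upd_state x (src a) q, upd_chan x (src a, dst a) (rcons (x.2 (src a, dst a)) a)) x1'.
      split.
      * by move=> k Hk; rewrite /x1' /= !ffunE; case: eqP => // _; apply: HR1.
      * move=> a' b' Ha' Hb'; rewrite /x1' /= !ffunE; case: eqP => [[Ea Eb]|_].
          by subst a' b'; rewrite HR2.
        exact: HR2.
      * move=> a' Ha'; rewrite /x1' /= !ffunE; case: eqP => [[Ea Ed]|_]; last exact: HR3.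
        subst a'; have [R HR] := HR3 (src a) Ha.
        by exists R; rewrite -Ed HR rcons_cat.
      * move=> b Hb; rewrite /x1' /= !ffunE xpair_eqE eq_sym (negbTE Ha) /=.
        exact: HR4.
    have Hc' : rf tt <= size (x1'.2 (i, td)).
      by move: Hc; rewrite /rf /recvs /x1' /= ffunE xpair_eqE eq_sym (negbTE Ha) /=.
    have [y' [Hy1 Hy2]] := IH _ x1' y Hr1 HRel Hc'.
    by exists y'; split=> //; econstructor; eauto.
-
  case: (eqVneq (dst a) i) => Ha.
  + have Hsa : src a != i by rewrite -Ha; exact: Hsd.
    rewrite /= Ha eqxx /=.
    apply: (IH _ x' y Hr1); last first.
      by move: Hc; rewrite /rf /recvs /= (negbTE Hsa).
    split.
    * by move=> k Hk; rewrite /= ffunE Ha (negbTE Hk) (HR1 k Hk).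
    * move=> a' b' Ha' Hb'; rewrite /= ffunE xpair_eqE Ha (negbTE Hb') andbF /=.
      exact: HR2.
    * move=> a' Ha'; rewrite /= ffunE xpair_eqE Ha eqxx andbT.
      case: (eqVneq a' (src a)) Ha' => [->|Hna] Ha'; last exact: HR3.
      have [R HR] := HR3 (src a) Hsa.
      by exists (rcons R a); rewrite HR -Ha Hw cat_rcons.
    * move=> b Hb; rewrite /= ffunE xpair_eqE [i == src a]eq_sym (negbTE Hsa) /=.
      exact: HR4.
  + rewrite /= Ha /=.
    case: (eqVneq (src a) i) => Hsa.
    *
      have Htda : dst a = td by apply: Htd.
      have [S0 HS0] := HR4 (dst a) Ha.
      move: Hc; rewrite /rf /recvs /= Hsa eqxx /= -/(recvs tt) -/(rf tt) => Hc.
      rewrite Hsa Htda in Hw; rewrite Htda Hw in HS0.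
      case E : (x'.2 (i, td)) Hc HS0 => [|b w'] //= Hc [Eb Ew]; subst b w.
      pose x1' : cfg := (upd_state x' (dst a) q, upd_chan x' (src a, dst a) w').
      have Hs' : step x' (Recv a) x1'.
        by apply: step_recv; [rewrite Hsa Htda E | rewrite (HR1 _ Ha)].
      have HRel : Rel (upd_state x (dst a) q, upd_chan x (src a, dst a) (w' ++ S0)) x1'.
          split.
          - by move=> k Hk; rewrite /x1' /= !ffunE; case: eqP => // _; apply: HR1.
          - move=> a' b' Ha' Hb'; rewrite /x1' /= !ffunE xpair_eqE Hsa (negbTE Ha') /=.
            exact: HR2.
          - move=> a' Ha'; rewrite /x1' /= !ffunE xpair_eqE Hsa (negbTE Ha') /=.
            exact: HR3.
          - move=> b Hb; rewrite /x1' /= !ffunE xpair_eqE Hsa eqxx /=.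
            case: (eqVneq b (dst a)) Hb => [->|Hbd] Hb; last exact: HR4.
            by exists S0.
      have Hc' : rf tt <= size (x1'.2 (i, td)).
        by rewrite /x1' /= ffunE xpair_eqE Hsa Htda !eqxx.
      have [y' [Hy1 Hy2]] := IH _ x1' y Hr1 HRel Hc'.
      by exists y'; split=> //; econstructor; eauto.
    * pose x1' : cfg := (upd_state x' (dst a) q, upd_chan x' (src a, dst a) w).
      have Hs' : step x' (Recv a) x1'.
        by apply: step_recv; [rewrite HR2 | rewrite (HR1 _ Ha)].
      have HRel : Rel (upd_state x (dst a) q, upd_chan x (src a, dst a) w) x1'.
          split.
          - by move=> k Hk; rewrite /x1' /= !ffunE; case: eqP => // _; apply: HR1.
          - move=> a' b' Ha' Hb'; rewrite /x1' /= !ffunE; case: eqP => // _.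
            exact: HR2.
          - move=> a' Ha'; rewrite /x1' /= !ffunE xpair_eqE [i == dst a]eq_sym (negbTE Ha) andbF /=.
            exact: HR3.
          - move=> b Hb; rewrite /x1' /= !ffunE xpair_eqE [i == src a]eq_sym (negbTE Hsa) /=.
            exact: HR4.
      have Hc' : rf tt <= size (x1'.2 (i, td)).
        by move: Hc; rewrite /rf /recvs /= (negbTE Hsa) /x1' /= ffunE xpair_eqE [i == src a]eq_sym (negbTE Hsa) /=.
      have [y' [Hy1 Hy2]] := IH _ x1' y Hr1 HRel Hc'.
      by exists y'; split=> //; econstructor; eauto.
Qed.

End Cut.

Lemma cut_lemma i t1 d t2 c : src d = i -> reach c0 (t1 ++ Send d :: t2) c ->
  size (filter (fun a => src a == i) (recvs (t1 ++ Send d :: t2))) <=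
    size (filter (fun a => src a == i) (sends t1)) ->
  exists c', reach c0 (t1 ++ filter (notfrom i) t2) c' /\ forall k, k != i -> c'.1 k = c.1 k.
Proof.
move=> Hd; subst i => /reach_cat [c1 [H1 H2]] Hcnt.
have Htd : forall m, src m = src d -> dst m = dst d by move=> m Hm; apply: ring_dst.
have HR : Rel (src d) c1 c1.
  split=> //.
    by move=> a _; exists [::].
  by move=> b _; exists [::]; rewrite cats0.
have Hc : rf (src d) (Send d :: t2) <= size (c1.2 (src d, dst d)).
  have := chan_inv H1 (src d) (dst d).
  rewrite /sent_on /recv_on !on_chan_src -/(recvs t1) => E.
  move: Hcnt; rewrite recvs_cat filter_cat size_cat E size_cat.
  by rewrite /rf /recvs /= leq_add2l.
have [y' [Hy1 Hy2]] := cut_gen Htd H2 HR Hc.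
exists y'; split=> //.
apply: (proj2 (reach_cat c0 t1 (filter (notfrom (src d)) t2) y')); exists c1; split=> //.
by move: Hy1; rewrite /= eqxx.
Qed.

Hypothesis H1sync : forall o, ST src dst S 1 o -> ST src dst S 0 o.

Lemma split_runs u1 u2 (h : 'I_N -> Q) :
  (forall k, lrun k (q0 S k) (proj k (u1 ++ u2)) (h k)) ->
  exists mid : 'I_N -> Q, forall k, lrun k (q0 S k) (proj k u1) (mid k) /\ lrun k (mid k) (proj k u2) (h k).
Proof.
move=> H.
have H' : forall k, exists m, lrun k (q0 S k) (proj k u1) m /\ lrun k m (proj k u2) (h k).
  by move=> k; have := H k; rewrite proj_cat => /lrun_cat.
by case/fin_all_exists: H' => mid Hm; exists mid.
Qed.

Lemma test_send_A u' a qa qb : L0 u' ->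
  lrun (src a) (q0 S (src a)) (proj (src a) u') qa -> delta S (src a) qa (Send a) qb ->
  L0 (rcons u' a).
Proof.
move=> /fin_all_exists [h Hh] Hp Hd.
pose g k := if k == src a then qa else h k.
have Hg : forall k, lrun k (q0 S k) (proj k u') (g k).
  by move=> k; rewrite /g; case: eqP => [->|]; auto.
have H1 := runs_reach1 Hg.
pose x1 : cfg := ([ffun k => g k], c0.2).
pose x2 : cfg := (upd_state x1 (src a) qb, upd_chan x1 (src a, dst a) (rcons (x1.2 (src a, dst a)) a)).
have Hs : step x1 (Send a) x2 by constructor; rewrite /x1 /= ffunE /g eqxx.
have Hb2 : bnd x2 by move=> i j; rewrite /x2 /x1 /= !ffunE; case: eqP.
have H : reach1 c0 (sync_of u' ++ [:: Send a]) x2.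
  apply/reach1_cat; exists x1; split=> //.
  by apply: r1cons (reach1_bnd H1) Hs (r1nil Hb2).
apply: ST0_L0; apply: H1sync.
exists (sync_of u' ++ [:: Send a]); split.
  by split; [exact: reach1_kb H | exists x2; exact: reach1_reach H].
by rewrite sends_cat sends_sync cats1.
Qed.

Lemma test_send_B v1 d v2 a qb : L0 (v1 ++ d :: v2) ->
  (forall m, m \in v2 -> src m != src d) -> dst d = src a ->
  lrun (src a) (q0 S (src a)) (proj (src a) (v1 ++ v2 ++ [:: a])) qb ->
  L0 (v1 ++ d :: v2 ++ [:: a]).
Proof.
move=> /fin_all_exists [h Hh] Hv2 Hdp Hp.
have [mid Hmid] := split_runs Hh.
have Hip : src d != src a by rewrite -Hdp; exact: Hsd.
move: Hp; rewrite !proj_cat => /lrun_cat [mp1 [Hp1 /lrun_cat [mp2 [Hp2 Hp3]]]].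
move: Hp3; rewrite /proj /= pj_src cats0 => /lrun_cons_inv [qb' [Hda /lrun_nil_inv Eq]]; subst qb'.
pose g1 k := if k == src a then mp1 else mid k.
have Hg1 : forall k, lrun k (q0 S k) (proj k v1) (g1 k).
  by move=> k; rewrite /g1; case: eqP => [->|_] //; case: (Hmid k).
have H1 := runs_reach1 Hg1.
pose x1 : cfg := ([ffun k => g1 k], c0.2).
have [_ Hmi] := Hmid (src d).
move: Hmi; rewrite proj_cons pj_src /= => /lrun_cons_inv [qi [Hdi Hri]].
pose x2 : cfg := (upd_state x1 (src d) qi, upd_chan x1 (src d, dst d) (rcons (x1.2 (src d, dst d)) d)).
have Hs2 : step x1 (Send d) x2.
  by constructor; rewrite /x1 /= ffunE /g1 (negbTE Hip).
have Hb2 : bnd x2 by move=> i j; rewrite /x2 /x1 /= !ffunE; case: eqP.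
pose h3 k := if k == src a then mp2 else h k.
have H3 : reach1 x2 (sync_of v2) ([ffun k => h3 k], x2.2).
  apply: sync_mix => //.
    by move=> m Hm; rewrite /x2 /x1 /= !ffunE xpair_eqE (negbTE (Hv2 m Hm)) /=.
  move=> k; rewrite /x2 /x1 /h3 /g1 /= !ffunE.
  case: (eqVneq k (src d)) => [->|Hkd].
    by rewrite (negbTE Hip).
  case: (eqVneq k (src a)) => [->|Hka] //.
  have [_ Hk] := Hmid k; move: Hk; rewrite proj_cons pj_other //.
  by rewrite Hdp.
pose x3 : cfg := ([ffun k => h3 k], x2.2).
pose x4 : cfg := (upd_state x3 (src a) qb, upd_chan x3 (src a, dst a) (rcons (x3.2 (src a, dst a)) a)).
have Hs4 : step x3 (Send a) x4 by constructor; rewrite /x3 /= ffunE /h3 eqxx.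
have Hx3a : x3.2 (src a, dst a) = [::].
  by rewrite /x3 /x2 /x1 /= !ffunE xpair_eqE eq_sym (negbTE Hip) /=.
have Hb4 : bnd x4.
  move=> i j; rewrite /x4 /=; rewrite ffunE; case: eqP => [_|_]; first by rewrite Hx3a.
  exact: Hb2.
have H : reach1 c0 (sync_of v1 ++ Send d :: sync_of v2 ++ [:: Send a]) x4.
  apply/reach1_cat; exists x1; split=> //.
  apply: r1cons (reach1_bnd H1) Hs2 _.
  apply/reach1_cat; exists x3; split=> //.
  by apply: r1cons (reach1_bnd H3) Hs4 (r1nil Hb4).
apply: ST0_L0; apply: H1sync.
exists (sync_of v1 ++ Send d :: sync_of v2 ++ [:: Send a]); split.
  by split; [exact: reach1_kb H | exists x4; exact: reach1_reach H].
by rewrite sends_cat sends_sync /sends /= -/(sends _) sends_cat sends_sync.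
Qed.

Lemma test_recv w0 y w1 qa qb : L0 (w0 ++ y :: w1) ->
  (forall m, m \in w1 -> dst m != dst y) ->
  lrun (dst y) (q0 S (dst y)) (proj (dst y) w0 ++ proj (dst y) w1) qa ->
  delta S (dst y) qa (Recv y) qb ->
  lrun (dst y) (q0 S (dst y)) (proj (dst y) (w0 ++ y :: w1)) qb.
Proof.
move=> /fin_all_exists [h Hh] Hw1 Hj Hd.
have [mid Hmid] := split_runs Hh.
have Hij : src y != dst y by exact: Hsd.
move: Hj => /lrun_cat [mj1 [Hj1 Hj2]].
pose g1 k := if k == dst y then mj1 else mid k.
have Hg1 : forall k, lrun k (q0 S k) (proj k w0) (g1 k).
  by move=> k; rewrite /g1; case: eqP => [->|_] //; case: (Hmid k).
have H1 := runs_reach1 Hg1.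
pose x1 : cfg := ([ffun k => g1 k], c0.2).
have [_ Hmi] := Hmid (src y).
move: Hmi; rewrite proj_cons pj_src /= => /lrun_cons_inv [qi [Hdi Hri]].
pose x2 : cfg := (upd_state x1 (src y) qi, upd_chan x1 (src y, dst y) (rcons (x1.2 (src y, dst y)) y)).
have Hs2 : step x1 (Send y) x2.
  by constructor; rewrite /x1 /= ffunE /g1 (negbTE Hij).
have Hb2 : bnd x2 by move=> i j; rewrite /x2 /x1 /= !ffunE; case: eqP.
pose h3 k := if k == dst y then qa else h k.
have H3 : reach1 x2 (sync_of w1) ([ffun k => h3 k], x2.2).
  apply: sync_mix => //.
    by move=> m Hm; rewrite /x2 /x1 /= !ffunE xpair_eqE (negbTE (Hw1 m Hm)) andbF /=.
  move=> k; rewrite /x2 /x1 /h3 /g1 /= !ffunE.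
  case: (eqVneq k (src y)) => [->|Hki].
    by rewrite (negbTE Hij).
  case: (eqVneq k (dst y)) => [->|Hkj] //.
  have [_ Hk] := Hmid k; move: Hk; rewrite proj_cons pj_other //.
pose x3 : cfg := ([ffun k => h3 k], x2.2).
pose x4 : cfg := (upd_state x3 (dst y) qb, upd_chan x3 (src y, dst y) [::]).
have Hs4 : step x3 (Recv y) x4.
  apply: step_recv; first by rewrite /x3 /x2 /x1 /= !ffunE eqxx.
  by rewrite /x3 /= ffunE /h3 eqxx.
have Hst4 : forall p, x4.2 p = [::].
  by move=> p; rewrite /x4 /x3 /x2 /x1 /= !ffunE; case: eqP => // _; case: eqP.
have Hb4 : bnd x4 by move=> i j; rewrite Hst4.
have H : reach1 c0 (sync_of w0 ++ Send y :: sync_of w1 ++ [:: Recv y]) x4.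
  apply/reach1_cat; exists x1; split=> //.
  apply: r1cons (reach1_bnd H1) Hs2 _.
  apply/reach1_cat; exists x3; split=> //.
  by apply: r1cons (reach1_bnd H3) Hs4 (r1nil Hb4).
have HST : ST src dst S 1 (STpair (w0 ++ y :: w1) x4).
  exists (sync_of w0 ++ Send y :: sync_of w1 ++ [:: Recv y]); split.
    by split; [exact: reach1_kb H | exists x4; exact: reach1_reach H].
  split; first by rewrite sends_cat sends_sync /sends /= -/(sends _) sends_cat sends_sync cats0.
  by split; [exact: reach1_reach H | move=> i j _; exact: Hst4].
have := ST0_runs (H1sync HST) (dst y).
by rewrite /x4 /= ffunE eqxx.
Qed.

Lemma count0 (P : pred Sigma) s : (forall a, a \in s -> ~~ P a) -> count P s = 0.
Proof.
elim: s => //= a s IH H; rewrite (negbTE (H a (mem_head _ _))) IH //.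
by move=> b Hb; apply: H; rewrite inE Hb orbT.
Qed.

Lemma filter_all (P : pred Sigma) s : (forall a, a \in s -> P a) -> filter P s = s.
Proof. by move=> H; apply/all_filterP/allP. Qed.

Lemma nrecv_rcons_send j (t : seq act) (a : Sigma) : nrecv j (rcons t (Send a)) = nrecv j t.
Proof. by rewrite /nrecv /recvs -cats1 pmap_cat /= cats0. Qed.

Lemma nrecv_rcons_recv j (t : seq act) (a : Sigma) : nrecv j (rcons t (Recv a)) = nrecv j t + (dst a == j).
Proof. by rewrite /nrecv /recvs -cats1 pmap_cat /= filter_cat size_cat /=; case: ifP. Qed.

Lemma sends_rcons_send (t : seq act) (a : Sigma) : sends (rcons t (Send a)) = rcons (sends t) a.
Proof. by rewrite -cats1 sends_cat -cats1. Qed.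

Lemma sends_rcons_recv (t : seq act) (a : Sigma) : sends (rcons t (Recv a)) = sends t.
Proof. by rewrite -cats1 sends_cat /sends /= cats0. Qed.

Lemma claim n : forall t c, size t <= n -> reach c0 t c ->
  L0 (sends t) /\ forall j, lrun j (q0 S j) (projk j (nrecv j t) (sends t)) (c.1 j).
Proof.
have base : forall c, reach c0 (Nil act) c ->
    L0 (sends (Nil act)) /\ forall j, lrun j (q0 S j) (projk j (nrecv j (Nil act)) (sends (Nil act))) (c.1 j).
  move=> c Hr; inversion Hr; subst; split.
    by move=> k; exists (q0 S k); constructor.
  by move=> j; rewrite /= ffunE; constructor.
elim: n => [|n IHn] t c Hsz Hr.
  by move: Hsz Hr; rewrite leqn0 => /nilP ->; apply: base.
case/lastP: t Hsz Hr => [|t' x] Hsz Hr; first exact: base.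
have Hr0 := Hr.
move: Hr => /reach_rcons [c' [Hr' Hs]].
have Hsz' : size t' <= n by rewrite size_rcons in Hsz.
have [IHL IHS] := IHn t' c' Hsz' Hr'.
inversion Hs as [? a q Hd E1 E2 | ? y q w Hw Hd E1 E2]; subst.
-
  rewrite sends_rcons_send; split.
  + case: (ltnP (nrecv (src a) t') (count (fun m => dst m == src a) (sends t'))) => Hlt; last first.
      apply: (test_send_A IHL _ Hd).
      by have := IHS (src a); rewrite projk_full.
    have /hasP [m Hm /eqP Hdm] : has (fun m => dst m == src a) (sends t').
      by rewrite has_count (leq_ltn_trans _ Hlt).
    have Hf : filter (fun b => src b == src m) (sends t') = filter (fun b => dst b == src a) (sends t').
      by rewrite filter_src_dst Hdm.
    have Hne : filter (fun b => src b == src m) (sends t') != [::].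
      by rewrite -size_eq0 Hf size_filter -lt0n (leq_ltn_trans _ Hlt).
    case/lastP E: (filter (fun b => src b == src m) (sends t')) Hne => [|R d] // _.
    have E' := E; rewrite -cats1 in E'.
    have [t1 [t2 [Et HR1 HR2]]] := split_send E'.
    have Hdsrc : src d = src m.
      have : d \in filter (fun b => src b == src m) (sends t') by rewrite E mem_rcons mem_head.
      by rewrite mem_filter => /andP [/eqP].
    have Hdd : dst d = src a by rewrite -Hdm; apply: ring_dst.
    have Hma : src m != src a by rewrite -Hdm; exact: Hsd.
    have Hreach : reach c0 (t1 ++ Send d :: rcons t2 (Send a))
        (upd_state c' (src a) q, upd_chan c' (src a, dst a) (rcons (c'.2 (src a, dst a)) a)).
      by move: Hr0; rewrite Et rcons_cat rcons_cons.
    have Hcnt : size (filter (fun b => src b == src m) (recvs (t1 ++ Send d :: rcons t2 (Send a)))) <=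
                size (filter (fun b => src b == src m) (sends t1)).
      rewrite -rcons_cons -rcons_cat -Et /recvs -cats1 pmap_cat /= cats0 -/(recvs t').
      rewrite filter_src_dst Hdm HR1.
      have : size (filter (fun b => src b == src m) (sends t')) = (size R).+1 by rewrite E size_rcons.
      rewrite Hf size_filter => Hc; move: Hlt; rewrite Hc /nrecv ltnS.
      by [].
    have [c'' [Hr'' _]] := cut_lemma Hdsrc Hreach Hcnt.
    have Hsz'' : size (t1 ++ filter (notfrom (src m)) (rcons t2 (Send a))) <= n.
      have := size_filter (notfrom (src m)) (rcons t2 (Send a)).
      have := count_size (notfrom (src m)) (rcons t2 (Send a)).
      move: Hsz; rewrite Et !size_cat /= !size_rcons size_cat /=.
      lia.
    have [HL'' _] := IHn _ _ Hsz'' Hr''.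
    move: HL''; rewrite sends_cat sends_notfrom sends_rcons_send.
    rewrite -[rcons (sends t2) a]cats1 filter_cat /= [src a == src m]eq_sym Hma filter_all; last first.
      by move=> b Hb; have := filter_nil_all HR2 Hb.
    move=> /(_ (src a)) [sp Hsp].
    have HL1 : L0 (sends t1 ++ d :: sends t2) by move: IHL; rewrite Et sends_cat.
    have Hv2 : forall m', m' \in sends t2 -> src m' != src d.
      by move=> m' Hm'; rewrite Hdsrc; exact: (filter_nil_all HR2 Hm').
    have Hsp' : lrun (src a) (q0 S (src a)) (proj (src a) (sends t1 ++ sends t2 ++ [:: a])) sp.
      exact: Hsp.
    have := test_send_B HL1 Hv2 Hdd Hsp'.
    by rewrite Et sends_cat -cats1 -catA.
  + move=> j; rewrite nrecv_rcons_send -cats1 projk_cat.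
    have -> : nrecv j t' - count (fun a => dst a == j) (sends t') = 0.
      by apply/eqP; rewrite subn_eq0; apply: nrecv_le Hr'.
    rewrite /= ffunE.
    case: (eqVneq j (src a)) => [Ej|Hj].
      apply/lrun_cat; exists (c'.1 j); split; first exact: IHS.
      by rewrite Ej; econstructor; [exact: Hd | constructor].
    rewrite if_same cats0; exact: IHS.
-
  rewrite sends_rcons_recv; split; first exact: IHL.
  move=> k; rewrite nrecv_rcons_recv /= ffunE.
  case: (eqVneq k (dst y)) => [Ek|Hk]; last first.
    by rewrite addn0; exact: IHS.
  subst k; rewrite addn1.
  set r := nrecv (dst y) t'.
  have Hci := chan_inv Hr' (src y) (dst y).
  rewrite Hw /sent_on /recv_on (on_chan_src y) (on_chan_dst y) -/(recvs t') in Hci.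
  have [ta [tb [Et HRa HRb]]] := split_send Hci.
  set u0 := sends ta; set v := sends tb.
  have Hu : sends t' = u0 ++ y :: v by rewrite Et sends_cat.
  have Hcnt : count (fun a => dst a == dst y) u0 = r.
    by rewrite -size_filter -filter_src_dst HRa.
  have Hk : forall k, projk (dst y) (r + k) (sends t') = proj (dst y) u0 ++ projk (dst y) k (y :: v).
    move=> k; rewrite Hu projk_cat Hcnt addKn projk_full //.
    by rewrite Hcnt leq_addr.
  have Hsy : (src y == dst y) = false by apply/negbTE; exact: Hsd.
  rewrite -addn1 Hk /= Hsy eqxx.
  have IHj := IHS (dst y); rewrite -/r -(addn0 r) Hk /= Hsy eqxx in IHj.
  have [w1 [HL Hw1 Hp]] : exists w1, [/\ L0 (u0 ++ y :: w1),
      forall m, m \in w1 -> dst m != dst y & proj (dst y) w1 = projk (dst y) 0 v].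
    case Ew: w HRb => [|d1 w''] HRb.
      exists v; split; first by rewrite -Hu.
        by move=> m Hm; rewrite -(srcdst_iff y m); exact: (filter_nil_all HRb Hm).
      rewrite projk_full // count0 // => m Hm.
      by rewrite -(srcdst_iff y m); exact: (filter_nil_all HRb Hm).
    have [tb1 [tb2 [Etb HRb1 HRb2]]] := split_send (R := [::]) HRb.
    have Hd1 : src d1 = src y.
      have : d1 \in filter (fun b => src b == src y) (sends tb) by rewrite HRb mem_head.
      by rewrite mem_filter => /andP [/eqP].
    have Hd1d : dst d1 = dst y by apply: ring_dst.
    have E : rcons t' (Recv y) = (ta ++ Send y :: tb1) ++ Send d1 :: rcons tb2 (Recv y).
      by rewrite Et Etb -!cats1 -!catA /= -!catA.
    have Hreach := Hr0; rewrite E in Hreach.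
    have Hcnt2 : size (filter (fun b => src b == src y) (recvs ((ta ++ Send y :: tb1) ++ Send d1 :: rcons tb2 (Recv y)))) <=
                 size (filter (fun b => src b == src y) (sends (ta ++ Send y :: tb1))).
      rewrite -E /recvs -cats1 pmap_cat /= -/(recvs t') filter_cat /= eqxx size_cat /=.
      rewrite sends_cat /sends /= -/(sends tb1) filter_cat /= eqxx HRa HRb1 size_cat /=.
      by rewrite filter_src_dst.
    have [c'' [Hr'' _]] := cut_lemma Hd1 Hreach Hcnt2.
    have Hsz'' : size ((ta ++ Send y :: tb1) ++ filter (notfrom (src y)) (rcons tb2 (Recv y))) <= n.
      have := size_filter (notfrom (src y)) (rcons tb2 (Recv y)).
      have := count_size (notfrom (src y)) (rcons tb2 (Recv y)).
      move: Hsz; rewrite Et Etb !size_cat /= !size_rcons !size_cat /=.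
      set zz := size (tb1 ++ _). rewrite /zz size_cat /=. lia.
    have [HL'' _] := IHn _ _ Hsz'' Hr''.
    move: HL''; rewrite sends_cat sends_notfrom sends_rcons_recv sends_cat /sends /= -/(sends tb1) -/(sends ta).
    rewrite -catA /= => HL''.
    exists (sends tb1 ++ filter (fun b => src b != src y) (sends tb2)); split=> //.
      move=> m; rewrite mem_cat => /orP [Hm|].
        by rewrite -(srcdst_iff y m); exact: (filter_nil_all HRb1 Hm).
      by rewrite mem_filter -(srcdst_iff y m) => /andP [].
    rewrite /v Etb sends_cat projk_cat /= sub0n Hd1 Hsy Hd1d eqxx.
    rewrite -(projk_full (k := 0)); last first.
      rewrite count0 // => m; rewrite mem_cat => /orP [Hm|].
        by rewrite -(srcdst_iff y m); exact: (filter_nil_all HRb1 Hm).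
      by rewrite mem_filter -(srcdst_iff y m) => /andP [].
    by rewrite projk_cat sub0n projk0_filter // Hsd.
  have := test_recv HL Hw1 _ Hd.
  rewrite proj_cat proj_cons pj_dst /= Hp; apply.
  exact: IHj.
Qed.

Lemma stable_full t c : reach c0 t c -> stable c ->
  forall j, count (fun a => dst a == j) (sends t) <= nrecv j t.
Proof.
move=> Hr Hst j.
case: (pickP (fun m => dst m == j)) => [m /eqP Hm|Hn]; last first.
  by rewrite count0 // => a _; rewrite Hn.
have := chan_inv Hr (src m) (dst m).
have Hne : src m != dst m by exact: Hsd.
rewrite (Hst _ _ Hne) cats0 /sent_on /recv_on !on_chan_dst -Hm => E.
by rewrite /nrecv -size_filter -/(recvs t) -E.
Qed.

Lemma omega_to_0 o : ST_omega src dst S o -> ST src dst S 0 o.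
Proof.
case: o => [u|u c].
  case=> t [[k [_ [c Hr]]] Hs].
  have [HL _] := claim (leqnn (size t)) Hr.
  by rewrite -Hs; apply: L0_ST0.
case=> t [[k [_ _]] [Hs [Hr Hst]]].
have [_ HS] := claim (leqnn (size t)) Hr.
rewrite -Hs; apply: (runs_ST0 Hr Hst) => j.
by have := HS j; rewrite projk_full // (stable_full Hr Hst).
Qed.

End Main.

Lemma ST_mono (Sigma : finType) (N : nat) (src dst : Sigma -> 'I_N) (Q : finType)
  (S : system Sigma N Q) (T1 T2 : seq (action Sigma) -> Prop) :
  (forall t, T1 t -> T2 t) -> forall o, ST_of src dst S T1 o -> ST_of src dst S T2 o.
Proof.
move=> H [u|u c] /=.
  by case=> t [Ht Hs]; exists t; split=> //; apply: H.
by case=> t [Ht Hs]; exists t; split=> //; apply: H.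
Qed.

Theorem theorem4p15 (Sigma : finType) (N : nat) (src dst : Sigma -> 'I_N)
  (HN : 0 < N) (Hsd : forall a : Sigma, src a != dst a)
  (Hring : oriented_ring src dst)
  (Q : finType) (S : system Sigma N Q) :
  one_synchronizable src dst S <-> synchronizable src dst S.
Proof.
split=> H o; split.
- by apply: ST_mono => t Ht; exists 0.
- by apply: (omega_to_0 Hsd Hring) => o' /H.
- by apply: ST_mono => t; apply: T0_T1.
- move=> H1; apply/H; move: H1; apply: ST_mono => t Ht; by exists 1.
Qed.
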